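(* In the multi-hop VAoI network described in the context, the VAoI at the destination node $N+1$ satisfies \[ \Delta_{N+1}(t)=\Delta_1(t-\tau_N)+\beta_N, \] where $\tau_N=\sum_{i=1}^N m_i$ and $\beta_N=\sum_{i=1}^N\eta_{m_i}$, with $m_i$ independent geometric random variables with parameters $\rho_i$ ($\mathbb{P}(m_i=\ell)=(1-\rho_i)^{\ell-1}\rho_i$, $\ell\ge1$) and $\eta_{m_i}$ conditionally on $m_i$ binomial with parameters $m_i$ and $p_g$ (the number of source versions generated during those $m_i$ slots). Moreover $\mathbb{E}[\tau_N]=\sum_{i=1}^N\frac1{\rho_i}$ and $\mathbb{E}[\beta_N]=p_g\sum_{i=1}^N\frac1{\rho_i}$.
   Context: Time is slotted. A source generates a new version in each slot independently with probability $p_g$, and its version index $V_S(t)$ increases by one at the start of the slot following each generation. Nodes $0,1,\dots,N+1$ form a line; node $0$ always holds the current source version ($V_0(t)=V_S(t)$), node $N+1$ is the destination, and nodes $1,\dots,N$ are relays. Each node stores only the latest version it has received. Link $i$ (from node $i$ to node $i+1$) delivers a transmission successfully with probability $\rho_i$, independently across slots and links ($\rho_0=p_s$). Node $0$ transmits according to an update policy; each relay node $i\ge1$ transmits its stored version in every slot, so that $V_{i+1}(t+1)=V_i(t)$ if the transmission on link $i$ at slot $t$ succeeds and $V_{i+1}(t+1)=V_{i+1}(t)$ otherwise. The VAoI at node $j$ is $\Delta_j(t)=V_S(t)-V_j(t)$. The random variable $m_i$ is the number of slots back to the last successful delivery on link $i$ (the relaying delay over link $i$). *)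

(* Defs.v *)
From mathcomp Require Import all_boot all_order all_algebra.
From mathcomp Require Import all_classical all_reals all_analysis.
Set Implicit Arguments.
Unset Strict Implicit.
Unset Printing Implicit Defensive.
Import Order.TTheory GRing.Theory Num.Theory.
Local Open Scope ring_scope.
Local Open Scope classical_set_scope.

(* Time slots are integers (infinite past).  The Bernoulli "event" variables
   are  X None s     : a new source version is generated in slot s,
        X (Some i) s : a transmission on link i at slot s succeeds.      *)

Definition bern_param (R : Type) (pg : R) (rho : nat -> R) (a : option nat) : R :=
  match a with None => pg | Some i => rho i end.

Definition valid_index (N : nat) (a : option nat) : bool :=
  match a with None => true | Some i => (i <= N)%N end.

Definition bernoulli_family (R : realType) (d : measure_display)
  (T : measurableType d) (P : probability T R) (N : nat) (pg : R)
  (rho : nat -> R) (X : option nat -> int -> T -> bool) : Prop :=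
  (forall a s, valid_index N a -> measurable [set w : T | X a s w]) /\
  (forall (L : seq (option nat * int)) (b : option nat * int -> bool),
     uniq L -> all (fun x => valid_index N x.1) L ->
     P [set w : T | forall x, x \in L -> X x.1 x.2 w = b x] =
     (\prod_(x <- L) (if b x then bern_param pg rho x.1
                      else 1 - bern_param pg rho x.1))%:E).

(* lookback S s w : number of slots back from time s to the last slot
   (strictly before s) in which S holds, i.e. the least k >= 1 with
   S (s - k); 0 if there is no such slot (a null event). *)
Definition lookback (T : Type) (S : int -> T -> bool) (s : int) (w : T) : nat :=
  match pselect (exists k : nat, S (s - (k.+1)%:Z) w) with
  | left ex => (@ex_minn (fun k => S (s - (k.+1)%:Z) w) ex).+1
  | right _ => 0%N
  end.

(* hop k : the time instant reached after tracing back k hops from the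
   destination N+1 at time t:  hop 0 = t, hop (k+1) = hop k - m_{N-k}. *)
Fixpoint hop (T : Type) (X : option nat -> int -> T -> bool) (N : nat)
  (t : int) (w : T) (k : nat) : int :=
  match k with
  | 0%N => t
  | k'.+1 => let s := hop X N t w k' in
             s - (lookback (X (Some (N - k')%N)) s w)%:Z
  end.

Definition mdelay (T : Type) (X : option nat -> int -> T -> bool) (N : nat)
  (t : int) (i : nat) (w : T) : nat :=
  lookback (X (Some i)) (hop X N t w (N - i)) w.

Definition eta (T : Type) (X : option nat -> int -> T -> bool) (N : nat)
  (t : int) (i : nat) (w : T) : nat :=
  let s := hop X N t w (N - i)%N in
  \sum_(k < mdelay X N t i w) nat_of_bool (X None ((s - 1 - (k : nat)%:Z)%R : int) w).

Definition tau (T : Type) (X : option nat -> int -> T -> bool) (N : nat)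
  (t : int) (w : T) : nat := \sum_(1 <= i < N.+1) mdelay X N t i w.

Definition beta (T : Type) (X : option nat -> int -> T -> bool) (N : nat)
  (t : int) (w : T) : nat := \sum_(1 <= i < N.+1) eta X N t i w.

(* VAoI at node j: Delta_j(s) = V_S(s) - V_j(s), with V 0 = V_S. *)
Definition Delta (T : Type) (V : nat -> int -> T -> int) (j : nat) (s : int)
  (w : T) : int := V 0%N s w - V j s w.

(* Main.v *)
Require Import Defs.
From mathcomp Require Import all_boot all_order all_algebra.
From mathcomp Require Import all_classical all_reals all_analysis.
From mathcomp Require Import measurable_realfun.
Import Order.TTheory GRing.Theory Num.Theory.
Local Open Scope ring_scope.
Local Open Scope classical_set_scope.
From mathcomp Require Import ring lra zify.
Set Implicit Arguments.
Unset Strict Implicit.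
Unset Printing Implicit Defensive.
Section S.
Context (R : realType) (d : measure_display) (T : measurableType d)
  (P : probability T R) (N : nat) (pg : R) (rho : nat -> R)
  (X : option nat -> int -> T -> bool).
Hypothesis pg01 : 0 <= pg <= 1.
Hypothesis rho01 : forall i, (i <= N)%N -> 0 < rho i <= 1.
Hypothesis Hfam : bernoulli_family P N pg rho X.

Definition cyl (L : seq (option nat * int)) (b : option nat * int -> bool) : set T :=
  [set w | forall x, x \in L -> X x.1 x.2 w = b x].
Definition cylP (L : seq (option nat * int)) (b : option nat * int -> bool) : R :=
  \prod_(x <- L) (if b x then bern_param pg rho x.1 else 1 - bern_param pg rho x.1).
Definition okL (S : pred (option nat)) (L : seq (option nat * int)) :=
  uniq L && all (fun x => valid_index N x.1 && S x.1) L.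

Lemma cylE S L b : okL S L -> P (cyl L b) = (cylP L b)%:E.
Proof.
case/andP=> uL aL; case: Hfam => _ ->//.
by apply/allP => x /(allP aL) /andP[].
Qed.

Lemma cyl_meas L b : all (fun x => valid_index N x.1) L -> measurable (cyl L b).
Proof.
elim: L => [|x L IH] /=.
  by rewrite (_ : cyl _ _ = setT) //; apply/seteqP; split => w //= _ x; rewrite in_nil.
case/andP => vx aL.
have -> : cyl (x :: L) b = [set w | X x.1 x.2 w = b x] `&` cyl L b.
  apply/seteqP; split => w /=.
    by move=> H; split; [apply: H; rewrite inE eqxx| move=> y yL; apply: H; rewrite inE yL orbT].
  by case=> H1 H2 y; rewrite inE => /orP[/eqP->//|/H2].
apply: measurableI; last exact: IH.
case: Hfam => Hm _.
case: (b x).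
  have -> : [set w | X x.1 x.2 w = true] = [set w | X x.1 x.2 w].
    by apply/seteqP; split=> w /=; case: (X _ _ _).
  exact: Hm.
have -> : [set w | X x.1 x.2 w = false] = ~` [set w | X x.1 x.2 w].
  by apply/seteqP; split=> w /=; case: (X _ _ _).
exact/measurableC/Hm.
Qed.

Lemma cylP_ge0 L b : (forall x, x \in L -> valid_index N x.1) -> 0 <= cylP L b.
Proof.
move=> H; rewrite /cylP big_seq; apply: prodr_ge0 => x /H.
case: x => [[i|] s] /=.
  move=> /rho01 /andP[r0 r1]; case: (b _); [exact: ltW| by rewrite subr_ge0].
by move=> _; case/andP: pg01 => p0 p1; case: (b _) => //; rewrite subr_ge0.
Qed.

Definition bcat (L1 : seq (option nat * int)) b1 b2 (x : option nat * int) : bool :=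
  if x \in L1 then b1 x else b2 x.

Lemma cylI L1 L2 b1 b2 : uniq (L1 ++ L2) ->
  cyl L1 b1 `&` cyl L2 b2 = cyl (L1 ++ L2) (bcat L1 b1 b2).
Proof.
rewrite cat_uniq => /and3P[_ dis _].
apply/seteqP; split => w /=.
  case=> H1 H2 x; rewrite mem_cat /bcat => /orP[xL|xL]; first by rewrite xL H1.
  have -> : (x \in L1) = false.
    by apply/negP => xL1; move/hasP: dis; apply; exists x.
  exact: H2.
move=> H; split => x xL.
  by rewrite H ?mem_cat ?xL // /bcat xL.
rewrite H ?mem_cat ?xL ?orbT // /bcat.
have -> : (x \in L1) = false by apply/negP => xL1; move/hasP: dis; apply; exists x.
by [].
Qed.

Lemma cylP_cat L1 L2 b1 b2 : uniq (L1 ++ L2) ->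
  cylP (L1 ++ L2) (bcat L1 b1 b2) = cylP L1 b1 * cylP L2 b2.
Proof.
rewrite cat_uniq => /and3P[_ dis _].
rewrite /cylP big_cat /=; congr (_ * _); rewrite !big_seq; apply: eq_bigr => x xL /=.
  by rewrite /bcat xL.
rewrite /bcat.
have -> : (x \in L1) = false by apply/negP => xL1; move/hasP: dis; apply; exists x.
by [].
Qed.

End S.
Lemma lookback0P (T : Type) (S : int -> T -> bool) s w :
  lookback S s w = 0%N <-> forall k : nat, ~~ S (s - (k.+1)%:Z) w.
Proof.
rewrite /lookback; case: pselect => [ex|nex]; split => //.
- by move=> H; case: ex => k Sk; move: (H k); rewrite Sk.
- by move=> _ k; apply/negP => Sk; apply: nex; exists k.
Qed.

Lemma lookbackSP (T : Type) (S : int -> T -> bool) s w l :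
  lookback S s w = l.+1 <->
  S (s - (l.+1)%:Z) w /\ forall k : nat, (k < l)%N -> ~~ S (s - (k.+1)%:Z) w.
Proof.
rewrite /lookback; case: pselect => [ex|nex].
  case: ex_minnP => m Sm minm; split.
    case=> <-; split => // k km; apply/negP => Sk.
    by move: (minm k Sk); rewrite leqNgt km.
  case=> Sl Hk; congr (_.+1).
  have ml := minm l Sl.
  apply/eqP; rewrite eqn_leq ml /=; rewrite leqNgt; apply/negP => /Hk.
  by rewrite Sm.
split => [//|[Sl _]]; exfalso; apply: nex; by exists l.
Qed.

Lemma lookback_lt (T : Type) (S : int -> T -> bool) s w l :
  (lookback S s w = l)%N -> (0 < l)%N -> S (s - l%:Z) w.
Proof. by case: l => // l /lookbackSP []. Qed.



Section S2.
Context (R : realType) (d : measure_display) (T : measurableType d)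
  (P : probability T R) (N : nat) (pg : R) (rho : nat -> R)
  (X : option nat -> int -> T -> bool).
Hypothesis pg01 : 0 <= pg <= 1.
Hypothesis rho01 : forall i, (i <= N)%N -> 0 < rho i <= 1.
Hypothesis Hfam : bernoulli_family P N pg rho X.

Local Notation cyl := (cyl X).
Local Notation cylP := (cylP pg rho).
Local Notation okL := (okL N).

Definition indep (S : pred (option nat)) (F : set T) (c : R) :=
  measurable F /\ forall L b, okL S L -> P (cyl L b `&` F) = (cylP L b * c)%:E.

Lemma indep_ge0 S F c : indep S F c -> 0 <= c.
Proof.
case=> _ /(_ [::] (fun _ => true) isT).
rewrite /cylP big_nil mul1r => Hc; rewrite -lee_fin -Hc; exact: measure_ge0.
Qed.

Lemma indep_P S F c : indep S F c -> P F = c%:E.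
Proof.
case=> _ /(_ [::] (fun _ => true) isT).
rewrite /cylP big_nil mul1r => <-; congr (P _); apply/seteqP; split => w.
  by move=> Fw; split => //; move=> x; rewrite in_nil.
by case.
Qed.

Lemma indep_cyl (S S' : pred (option nat)) F c Lg bg : indep S F c -> okL S Lg ->
  (forall x, x \in Lg -> ~~ S' x.1) -> (forall a, S' a -> S a) ->
  indep S' (cyl Lg bg `&` F) (cylP Lg bg * c).
Proof.
move=> [mF HF] okg notS' S'S; split.
  apply: measurableI => //; apply: (cyl_meas Hfam).
  by case/andP: okg => _ /allP H; apply/allP => x /H /andP[].
move=> L b okl.
have uLg : uniq (L ++ Lg).
  case/andP: (okl) => uL _; case/andP: (okg) => ug _.
  rewrite cat_uniq uL ug andbT /=; apply/hasPn => x /notS' nx.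
  apply/negP => xL; case/andP: (okl) => _ /allP/(_ x xL)/andP[_]; by rewrite (negbTE nx).
rewrite setIA cylI // HF.
  by rewrite cylP_cat // mulrA.
rewrite /okL uLg /= all_cat; apply/andP; split.
  case/andP: (okl) => _ /allP H; apply/allP => x /H /andP[-> /S'S ->] //.
by case/andP: okg.
Qed.

Lemma indep_sub (S S' : pred (option nat)) F c : indep S F c -> (forall a, S' a -> S a) -> indep S' F c.
Proof.
move=> [mF HF] S'S; split => // L b /andP[uL /allP aL]; apply: HF.
by rewrite /okL uL; apply/allP => x /aL /andP[-> /S'S].
Qed.

Definition geoL (i : nat) (s : int) (l : nat) : seq (option nat * int) :=
  [seq (Some i, s - (k.+1)%:Z) | k <- iota 0 l.+1].
Definition geoB (s : int) (l : nat) (x : option nat * int) : bool :=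
  x.2 == s - (l.+1)%:Z.
Definition noL (i : nat) (s : int) (n : nat) : seq (option nat * int) :=
  [seq (Some i, s - (k.+1)%:Z) | k <- iota 0 n].

Lemma shift_inj (i : nat) (s : int) : injective (fun k : nat => (Some i, s - (k.+1)%:Z)).
Proof.
move=> a b [] /eqP; rewrite (inj_eq (addrI s)) (inj_eq oppr_inj) => /eqP [] //.
Qed.

Lemma okL_shift (S : pred (option nat)) i (s : int) n : (i <= N)%N -> S (Some i) ->
  okL S [seq (Some i, s - (k.+1)%:Z) | k <- iota 0 n].
Proof.
move=> iN Si; rewrite /okL map_inj_uniq ?iota_uniq /=; last exact: shift_inj.
by apply/allP => x /mapP [k _ ->] /=; rewrite iN Si.
Qed.

Lemma GeoE i s l : cyl (geoL i s l) (geoB s l) =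
  [set w | lookback (X (Some i)) s w = l.+1].
Proof.
apply/seteqP; split => w /=.
  move=> H; apply/lookbackSP; split.
    have := H (Some i, s - (l.+1)%:Z); rewrite /geoB eqxx /=; apply.
    by apply/mapP; exists l => //; rewrite mem_iota add0n ltnS leqnn.
  move=> k kl.
  have Hm : (Some i, s - (k.+1)%:Z) \in geoL i s l.
    by apply/mapP; exists k => //; rewrite mem_iota add0n ltnS leq0n /=; exact: ltnW.
  rewrite (H _ Hm) /geoB /=.
  by rewrite (inj_eq (addrI s)) (inj_eq oppr_inj) eqz_nat eqSS (ltn_eqF kl).
move/lookbackSP => [Sl Hk] x /mapP [k]; rewrite mem_iota add0n ltnS /= => kl -> /=.
rewrite /geoB /= (inj_eq (addrI s)) (inj_eq oppr_inj) eqz_nat eqSS.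
case: (ltngtP k l) => [kl'||->] //; first by rewrite (negbTE (Hk _ kl')).
by move=> lk; move: kl; rewrite leqNgt lk.
Qed.

Lemma cylP_geo i s l : cylP (geoL i s l) (geoB s l) = (1 - rho i) ^+ l * rho i.
Proof.
rewrite /cylP /geoL big_map.
have -> : iota 0 l.+1 = index_iota 0 l.+1 by rewrite /index_iota subn0.
rewrite big_nat_recr //= /geoB /= eqxx; congr (_ * _).
rewrite -[in RHS](subn0 l) -prodr_const_nat; apply: eq_big_nat => k /andP[_ kl].
by rewrite (inj_eq (addrI s)) (inj_eq oppr_inj) eqz_nat eqSS (ltn_eqF kl).
Qed.

Lemma cylP_no i s n : cylP (noL i s n) (fun=> false) = (1 - rho i) ^+ n.
Proof.
rewrite /cylP /noL big_map.
have -> : iota 0 n = index_iota 0 n by rewrite /index_iota subn0.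
by rewrite -[in RHS](subn0 n) -prodr_const_nat.
Qed.

Definition NoSucc i s := [set w | forall k : nat, ~~ X (Some i) (s - (k.+1)%:Z) w].

Lemma NoSuccE i s : NoSucc i s = [set w | lookback (X (Some i)) s w = 0%N].
Proof. by apply/seteqP; split => w /=; move/lookback0P. Qed.

Lemma NoSucc_meas i s : (i <= N)%N -> measurable (NoSucc i s).
Proof.
move=> iN.
have -> : NoSucc i s = \bigcap_(k in setT) ~` [set w | X (Some i) (s - (k.+1)%:Z) w].
  apply/seteqP; split => w /=.
    by move=> H k _; apply/negP; exact: H.
  by move=> H k; apply/negP; exact: (H k I).
apply: bigcapT_measurable => k; apply: measurableC.
by case: Hfam => Hm _; apply: Hm.
Qed.

Lemma NoSucc_sub i s n : NoSucc i s `<=` cyl (noL i s n) (fun=> false).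
Proof.
move=> w /= H x /mapP [k _ ->] /=; exact/negbTE/H.
Qed.

End S2.

Lemma geo_eseries (R : realType) (a x : R) : 0 <= x < 1 ->
  (\sum_(n <oo) (a * x ^+ n)%:E = (a / (1 - x))%:E)%E.
Proof.
case/andP=> x0 x1.
have nx : `|x| < 1 by rewrite ger0_norm.
have -> : (fun n => \sum_(0 <= k < n) (a * x ^+ k)%:E)%E = EFin \o series (geometric a x).
  by apply/funext => n /=; rewrite sumEFin.
rewrite EFin_lim; last exact: is_cvg_geometric_series.
congr (_%:E).
have /(@cvg_unique _ (@Rhausdorff R)) := @cvg_geometric_series _ a _ nx.
by move/(_ _ (@is_cvg_geometric_series _ a _ nx)) => ->.
Qed.

Section S3.
Context (R : realType) (d : measure_display) (T : measurableType d)
  (P : probability T R) (N : nat) (pg : R) (rho : nat -> R)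
  (X : option nat -> int -> T -> bool).
Hypothesis pg01 : 0 <= pg <= 1.
Hypothesis rho01 : forall i, (i <= N)%N -> 0 < rho i <= 1.
Hypothesis Hfam : bernoulli_family P N pg rho X.

Local Notation cyl := (cyl X).
Local Notation cylP := (cylP pg rho).
Local Notation okL := (okL N).
Local Notation indep := (indep P N pg rho X).
Local Notation Geo i s l := (cyl (geoL i s l) (geoB s l)).
Local Notation NoSucc := (NoSucc X).

Lemma lb_decomp i s (F : int -> set T) :
  [set w | F (s - (lookback (X (Some i)) s w)%:Z) w] =
  (NoSucc i s `&` F s) `|` \bigcup_l (Geo i s l `&` F (s - (l.+1)%:Z)).
Proof.
apply/seteqP; split => w /=.
  case E: (lookback _ s w) => [|l] H.
    by left; split; [rewrite NoSuccE| rewrite subr0 in H].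
  by right; exists l => //; split => //; rewrite GeoE.
case=> [[]|[l _ []]].
  by rewrite NoSuccE /= => ->; rewrite subr0.
by rewrite GeoE /= => ->.
Qed.

Lemma Geo_meas i s l : (i <= N)%N -> measurable (Geo i s l).
Proof.
move=> iN; apply: (cyl_meas Hfam).
by apply/allP => x /mapP [k _ ->].
Qed.

Lemma lb_decomp_measure i s (F : int -> set T) (C : set T) : (i <= N)%N ->
  measurable C -> (forall s, measurable (F s)) ->
  P (C `&` [set w | F (s - (lookback (X (Some i)) s w)%:Z) w]) =
  (P (C `&` (NoSucc i s `&` F s)) +
   \sum_(l <oo) P (C `&` (Geo i s l `&` F (s - (l.+1)%:Z)%R)))%E.
Proof.
move=> iN mC mF.
have mG l : measurable (C `&` (Geo i s l `&` F (s - (l.+1)%:Z))).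
  by apply: measurableI => //; apply: measurableI => //; exact: Geo_meas.
rewrite lb_decomp setIUr measureU //.
- rewrite setI_bigcupr; congr (_ + _)%E.
    transitivity (\sum_(l <oo | l \in setT) P (C `&` (Geo i s l `&` F (s - (l.+1)%:Z)%R)))%E.
      apply: (measure_bigcup P) => //.
      move=> l l' _ _ [w [[_ [G1 _]] [_ [G2 _]]]]; move: G1 G2; rewrite !GeoE /= => H1 H2.
      by rewrite H1 in H2; case: H2.
    by apply: eq_eseriesl => l; rewrite in_setT.
- by apply: measurableI => //; apply: measurableI => //; exact: (NoSucc_meas Hfam).
- by rewrite setI_bigcupr; apply: bigcupT_measurable => l; exact: mG.
- apply/seteqP; split => [w [[_ [H1 _]] [_ [l _ [H2 _]]]]|//].
  move: H1 H2; rewrite NoSuccE GeoE /= => H1 H2; rewrite H1 in H2; congruence.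
Qed.

Lemma NoSucc_null i s : (i <= N)%N -> P (NoSucc i s) = 0%E.
Proof.
move=> iN.
have := @lb_decomp_measure i s (fun _ => setT) setT iN measurableT (fun _ => measurableT).
have HG l : P ([set: T] `&` (Geo i s l `&` [set: T])) = (rho i * (1 - rho i) ^+ l)%:E.
  rewrite setTI setIT (cylE Hfam (S := predT)); first by rewrite cylP_geo mulrC.
  exact: okL_shift.
under eq_eseriesr do rewrite HG.
rewrite !setTI setIT.
have -> : [set w | [set: T] w] = setT by [].
rewrite probability_setT.
case/andP: (rho01 iN) => r0 r1.
rewrite geo_eseries; last by rewrite subr_ge0 r1 /= ltrBlDr ltrDl.
have -> : 1 - (1 - rho i) = rho i by rewrite opprB addrC subrK.
rewrite divff ?gt_eqF //.
have : (0 <= P (NoSucc i s) <= 1)%E.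
  by rewrite measure_ge0 /=; apply: probability_le1; exact: (NoSucc_meas Hfam).
case: (P (NoSucc i s)) => [r||] //=; rewrite !lee_fin => /andP[r0' r1'].
move/eqP; rewrite -EFinD eqe => /eqP H; congr (_%:E); lra.
Qed.

End S3.

Definition above (m : nat) (a : option nat) : bool :=
  if a is Some i then (m < i)%N else false.

Section S4.
Context (R : realType) (d : measure_display) (T : measurableType d)
  (P : probability T R) (N : nat) (pg : R) (rho : nat -> R)
  (X : option nat -> int -> T -> bool).
Hypothesis pg01 : 0 <= pg <= 1.
Hypothesis rho01 : forall i, (i <= N)%N -> 0 < rho i <= 1.
Hypothesis Hfam : bernoulli_family P N pg rho X.

Local Notation cyl := (cyl X).
Local Notation cylP := (cylP pg rho).
Local Notation okL := (okL N).
Local Notation indep := (indep P N pg rho X).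
Local Notation Geo i s l := (cyl (geoL i s l) (geoB s l)).
Local Notation NoSucc := (NoSucc X).

Lemma okL_all S L : okL S L -> all (fun x => valid_index N x.1) L.
Proof. by case/andP=> _ /allP H; apply/allP => x /H /andP[]. Qed.

Lemma indep_step (S S2 : pred (option nat)) i (F : int -> set T) c :
  (i <= N)%N -> (forall a, S a -> S2 a) -> S2 (Some i) -> ~~ S (Some i) ->
  (forall s, indep S2 (F s) c) ->
  forall s, indep S [set w | F (s - (lookback (X (Some i)) s w)%:Z) w] c.
Proof.
move=> iN SS2 S2i nSi HF s.
have mF s' : measurable (F s') by case: (HF s').
split.
  rewrite (lb_decomp X i s F); apply: measurableU.
    by apply: measurableI => //; exact: (NoSucc_meas Hfam).
  by apply: bigcupT_measurable => l; apply: measurableI => //; exact: (Geo_meas Hfam).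
move=> L b okl.
have mC : measurable (cyl L b) by apply: (cyl_meas Hfam); exact: okL_all okl.
rewrite (lb_decomp_measure Hfam) //.
have -> : P (cyl L b `&` (NoSucc i s `&` F s)) = 0%E.
  apply/eqP; rewrite eq_le measure_ge0 andbT -(NoSucc_null rho01 Hfam s iN).
  apply: le_measure; rewrite ?inE.
  - by apply: measurableI => //; apply: measurableI => //; exact: (NoSucc_meas Hfam).
  - exact: (NoSucc_meas Hfam).
  - by move=> w [_ []].
rewrite add0e.
have Ht l : P (cyl L b `&` (Geo i s l `&` F (s - (l.+1)%:Z)%R)) =
    ((cylP L b * c * rho i) * (1 - rho i) ^+ l)%:E.
  have ng : forall x, x \in geoL i s l -> ~~ S x.1.
    by move=> x /mapP [k _ ->].
  have [_ H] := indep_cyl Hfam (geoB s l) (HF (s - (l.+1)%:Z)%R)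
    (okL_shift s l.+1 iN S2i) ng SS2.
  rewrite H; last exact: okl.
  by rewrite cylP_geo; congr (_%:E); ring.
under eq_eseriesr do rewrite Ht.
case/andP: (rho01 iN) => r0 r1.
rewrite geo_eseries; last by rewrite subr_ge0 r1 /= ltrBlDr ltrDl.
have -> : 1 - (1 - rho i) = rho i by rewrite opprB addrC subrK.
by congr (_%:E); field; rewrite gt_eqF.
Qed.

Lemma hop_gen t j : (j <= N)%N -> forall (F : int -> set T) c,
  (forall s, indep (above (N - j)%N) (F s) c) ->
  measurable [set w | F (hop X N t w j) w] /\ P [set w | F (hop X N t w j) w] = c%:E.
Proof.
elim: j => [|j IH] jN F c HF.
  have -> : [set w | F (hop X N t w 0) w] = F t by [].
  by case: (HF t) => mF _; split => //; exact: indep_P (HF t).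
pose G (s : int) := [set w | F (s - (lookback (X (Some (N - j)%N)) s w)%:Z) w].
have -> : [set w | F (hop X N t w j.+1) w] = [set w | G (hop X N t w j) w] by [].
apply: (IH (ltnW jN) G c) => s.
apply: (indep_step (S2 := above (N - j.+1)%N)).
- exact: leq_subr.
- by case => // i /=; lia.
- by rewrite /=; lia.
- by rewrite /= ltnn.
- exact: HF.
Qed.

Lemma joint_gen t (l : nat -> nat) : (forall i, (1 <= i <= N)%N -> (0 < l i)%N) ->
  forall j, (j <= N)%N -> forall (F : int -> set T) c,
  (forall s, indep (above (N - j)%N) (F s) c) ->
  P [set w | (forall i, (N - j < i <= N)%N -> mdelay X N t i w = l i) /\ F (hop X N t w j) w] =
  ((\prod_((N - j)%N.+1 <= i < N.+1) ((1 - rho i) ^+ (l i).-1 * rho i)) * c)%:E.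
Proof.
move=> lpos; elim => [|j IH] jN F c HF.
  rewrite subn0 big_geq // mul1r -(indep_P (HF t)); congr (P _).
  apply/seteqP; split => w /=; first by case.
  by move=> Fw; split => // i; lia.
pose i0 := (N - j)%N.
have i0N : (1 <= i0 <= N)%N by rewrite /i0; lia.
have li0 := lpos _ i0N.
pose G s := Geo i0 s (l i0).-1 `&` F (s - (l i0)%:Z)%R.
have -> : [set w | (forall i, (N - j.+1 < i <= N)%N -> mdelay X N t i w = l i) /\
                   F (hop X N t w j.+1) w] =
          [set w | (forall i, (N - j < i <= N)%N -> mdelay X N t i w = l i) /\
                   G (hop X N t w j) w].
  have Nj : (N - i0 = j)%N by rewrite /i0; lia.
  apply/seteqP; split => w /=.
    case=> Hi Fw; split.
      by move=> i ii; apply: Hi; lia.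
    have Hm : mdelay X N t i0 w = l i0 by apply: Hi; lia.
    move: Hm; rewrite /mdelay Nj => Hm; split.
      by rewrite GeoE /= Hm prednK.
    by move: Fw => /=; rewrite -/i0 Hm.
  case=> Hi [Gw Fw]; move: Gw; rewrite GeoE /= prednK // => Hm.
  split.
    move=> i ii; case: (ltngtP i i0) => [iil|iig|->].
    - lia.
    - by apply: Hi; rewrite /i0 in iig; lia.
    - by rewrite /mdelay Nj.
  by rewrite /= -/i0 Hm.
rewrite (IH (ltnW jN) G ((1 - rho i0) ^+ (l i0).-1 * rho i0 * c)).
  have -> : ((N - j.+1)%N.+1 = N - j)%N by lia.
  rewrite [in RHS]big_ltn; last lia.
  by congr (_%:E); rewrite /i0; ring.
move=> s; rewrite /G.
rewrite -(@cylP_geo R pg rho i0 s (l i0).-1); apply: (indep_cyl Hfam (S := above (N - j.+1)%N)).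
- exact: HF.
- apply: okL_shift => /=; lia.
- by move=> x /mapP [k _ ->] /=; rewrite ltnn.
- by case => // i /=; lia.
Qed.

End S4.

Definition binom (R : realType) (pg : R) (l k : nat) : R :=
  'C(l, k)%:R * pg ^+ k * (1 - pg) ^+ (l - k).

Lemma binom0S (R : realType) (pg : R) l : binom pg l.+1 0 = (1 - pg) * binom pg l 0.
Proof. by rewrite /binom !bin0 !subn0 !expr0 exprS; ring. Qed.

Lemma binomSS (R : realType) (pg : R) l k :
  binom pg l.+1 k.+1 = pg * binom pg l k + (1 - pg) * binom pg l k.+1.
Proof.
rewrite /binom binS natrD subSS.
case: (ltnP k l) => kl.
  have -> : (l - k = (l - k.+1).+1)%N by lia.
  rewrite !exprS; ring.
rewrite (bin_small (n := l) (m := k.+1)); last by rewrite ltnS.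
have -> : (l - k = 0)%N by lia.
rewrite !exprS; ring.
Qed.

Lemma binom0k (R : realType) (pg : R) k : binom pg 0 k = (k == 0)%N%:R.
Proof. by case: k => [|k]; rewrite /binom ?bin0 ?bin0n //= ?expr0 ?mulr1 ?mul0r. Qed.

Section S5.
Context (R : realType) (d : measure_display) (T : measurableType d)
  (P : probability T R) (N : nat) (pg : R) (rho : nat -> R)
  (X : option nat -> int -> T -> bool).
Hypothesis pg01 : 0 <= pg <= 1.
Hypothesis rho01 : forall i, (i <= N)%N -> 0 < rho i <= 1.
Hypothesis Hfam : bernoulli_family P N pg rho X.

Local Notation cyl := (cyl X).
Local Notation cylP := (cylP pg rho).
Local Notation okL := (okL N).
Local Notation indep := (indep P N pg rho X).
Local Notation Geo i s l := (cyl (geoL i s l) (geoB s l)).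

Definition Cnt (s : int) (l k : nat) : set T :=
  [set w | (\sum_(k' < l) nat_of_bool (X None ((s - 1 - (k' : nat)%:Z)%R : int) w))%N = k].

Definition xN (s : int) (l : nat) : option nat * int := (None, (s - 1 - l%:Z)%R).

Lemma cyl1 x b : cyl [:: x] b = [set w | X x.1 x.2 w = b x].
Proof.
apply/seteqP; split => w /=.
  by move=> H; apply: H; rewrite inE.
by move=> H y; rewrite inE => /eqP ->.
Qed.

Lemma Cnt_split s l k : Cnt s l.+1 k =
  (cyl [:: xN s l] (fun=> true) `&` (if k is k'.+1 then Cnt s l k' else set0)) `|`
  (cyl [:: xN s l] (fun=> false) `&` Cnt s l k).
Proof.
rewrite !cyl1 /Cnt; apply/seteqP; split => w /=; rewrite big_ord_recr /=.
  case E: (X None _ w) => /=.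
    by move=> <-; left; split => //; rewrite addn1.
  by rewrite addn0 => <-; right.
case=> -[E].
  by case: k => [//|k] /= <-; rewrite E addn1.
by move=> <-; rewrite E addn0.
Qed.

Lemma Cnt_meas s l k : measurable (Cnt s l k).
Proof.
elim: l k => [|l IH] k.
  case: k => [|k].
    by rewrite (_ : Cnt s 0 0 = setT) //; rewrite /Cnt; apply/seteqP; split => w //= _; rewrite big_ord0.
  by rewrite (_ : Cnt s 0 k.+1 = set0) //; rewrite /Cnt; apply/seteqP; split => w //=; rewrite big_ord0.
have mx b : measurable (cyl [:: xN s l] b).
  by apply: (cyl_meas Hfam).
rewrite Cnt_split; apply: measurableU; apply: measurableI => //.
by case: k.
Qed.

Lemma Cnt_P s l : forall k L b, uniq L -> all (fun x => valid_index N x.1) L ->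
  (forall x, x \in L -> x.1 = None -> ~~ ((s - l%:Z <= x.2) && (x.2 < s))%R) ->
  P (cyl L b `&` Cnt s l k) = (cylP L b * binom pg l k)%:E.
Proof.
elim: l => [|l IH] k L b uL vL sL.
  rewrite binom0k; case: k => [|k].
    rewrite (_ : Cnt s 0 0 = setT); last by rewrite /Cnt; apply/seteqP; split => w //= _; rewrite big_ord0.
    by rewrite setIT (cylE Hfam (S := predT)) ?mulr1 // /okL uL; apply/allP => x /(allP vL) ->.
  rewrite (_ : Cnt s 0 k.+1 = set0); last by rewrite /Cnt; apply/seteqP; split => w //=; rewrite big_ord0.
  by rewrite setI0 measure0 mulr0.
have x0L : xN s l \notin L.
  apply/negP => /sL /(_ erefl) /=; apply/negP; rewrite negbK; apply/andP; split; lia.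
have uLx : uniq (L ++ [:: xN s l]) by rewrite cat_uniq uL /= orbF x0L.
have vLx : all (fun x => valid_index N x.1) (L ++ [:: xN s l]) by rewrite all_cat vL.
have sLx : forall x, x \in L ++ [:: xN s l] -> x.1 = None ->
    ~~ ((s - l%:Z <= x.2) && (x.2 < s))%R.
  move=> x; rewrite mem_cat inE => /orP[xL xN0|/eqP -> _ /=].
    apply: contra (sL x xL xN0) => /andP[h1 h2]; apply/andP; split; lia.
  apply/negP => /andP[h1 h2]; lia.
have mx bb : measurable (cyl [:: xN s l] bb) by apply: (cyl_meas Hfam).
have mC : measurable (cyl L b) by apply: (cyl_meas Hfam).
have HI bb C : cyl L b `&` (cyl [:: xN s l] (fun=> bb) `&` C) =
    cyl (L ++ [:: xN s l]) (bcat L b (fun=> bb)) `&` C.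
  by rewrite setIA cylI.
have HP bb : cylP (L ++ [:: xN s l]) (bcat L b (fun=> bb)) =
    cylP L b * (if bb then pg else 1 - pg).
  by rewrite cylP_cat // /cylP big_seq1.
rewrite Cnt_split setIUr.
rewrite (_ : P (_ `|` _) =
   (P (cyl L b `&` (cyl [:: xN s l] (fun=> true) `&` (if k is k'.+1 then Cnt s l k' else set0))) +
    P (cyl L b `&` (cyl [:: xN s l] (fun=> false) `&` Cnt s l k)))%E); last first.
  apply: measureU.
  - apply: measurableI => //; apply: measurableI => //; case: k => // k; exact: Cnt_meas.
  - by apply: measurableI => //; apply: measurableI => //; exact: Cnt_meas.
  - apply/seteqP; split => [w [[_ [+ _]] [_ [+ _]]]|//].
    by rewrite !cyl1 /= => ->.
rewrite !HI (IH k _ _ uLx vLx sLx) HP.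
case: k => [|k].
  by rewrite setI0 measure0 add0e binom0S; congr (_%:E); ring.
by rewrite (IH k _ _ uLx vLx sLx) HP binomSS -EFinD; congr (_%:E); ring.
Qed.

Lemma Cnt_indep s l k : indep (fun a => a != None) (Cnt s l k) (binom pg l k).
Proof.
split; first exact: Cnt_meas.
move=> L b /andP[uL aL]; apply: Cnt_P => //.
  by apply/allP => x /(allP aL) /andP[].
by move=> x /(allP aL) /andP[_ +] xn; rewrite xn.
Qed.

Lemma GeoCnt_indep i s l k : (1 <= i <= N)%N ->
  indep (above i) (Geo i s l `&` Cnt s l.+1 k)
    ((1 - rho i) ^+ l * rho i * binom pg l.+1 k).
Proof.
move=> /andP[i1 iN].
rewrite -(@cylP_geo R pg rho i s l); apply: (indep_cyl Hfam (S := fun a => a != None)).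
- exact: Cnt_indep.
- exact: okL_shift.
- by move=> x /mapP [k' _ ->] /=; rewrite ltnn.
- by case.
Qed.

End S5.

Section Delta.
Context (T : Type) (N : nat) (X : option nat -> int -> T -> bool)
  (u : int -> T -> bool) (V : nat -> int -> T -> int).
Hypothesis hV0 : forall s w, V 0%N (s + 1) w = V 0%N s w + ((X None s w : nat)%:Z).
Hypothesis hVi : forall i s w, (1 <= i <= N)%N ->
     V i.+1 (s + 1) w = if X (Some i) s w then V i s w else V i.+1 s w.

Lemma Vsrc s w m : V 0%N s w =
  V 0%N (s - m%:Z) w + (\sum_(k < m) nat_of_bool (X None ((s - 1 - (k : nat)%:Z)%R : int) w))%N%:Z.
Proof.
elim: m => [|m IH]; first by rewrite subr0 big_ord0 addr0.
rewrite IH big_ord_recr /= PoszD addrA.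
have E : V 0%N (s - m%:Z) w = V 0%N (s - (m.+1)%:Z) w + (X None (s - (m.+1)%:Z) w : nat)%:Z.
  by rewrite -hV0; congr (V 0%N _ w); lia.
rewrite E [LHS]addrAC; congr (_ + _).
congr (Posz (nat_of_bool (X None _ w))); lia.
Qed.

Lemma Vrelay i s w l : (1 <= i <= N)%N -> lookback (X (Some i)) s w = l.+1 ->
  V i.+1 s w = V i (s - (l.+1)%:Z) w.
Proof.
move=> iN /lookbackSP [Sl Hk].
have H n : (n <= l)%N -> V i.+1 (s - (l.+1)%:Z + 1 + n%:Z) w = V i (s - (l.+1)%:Z) w.
  elim: n => [_|n IH nl].
    by rewrite addr0 hVi // Sl.
  have -> : s - (l.+1)%:Z + 1 + (n.+1)%:Z = (s - (l.+1)%:Z + 1 + n%:Z) + 1 by lia.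
  rewrite hVi //.
  have -> : s - (l.+1)%:Z + 1 + n%:Z = s - ((l - n.+1)%N.+1)%:Z by lia.
  rewrite (negbTE (Hk _ _)); last by lia.
  rewrite (_ : s - ((l - n.+1)%N.+1)%:Z = s - (l.+1)%:Z + 1 + n%:Z); last by lia.
  by apply: IH; exact: ltnW.
have := H l (leqnn l).
by have -> : s - (l.+1)%:Z + 1 + l%:Z = s by lia.
Qed.

Lemma delta_gen t w : (forall i s, (1 <= i <= N)%N -> (0 < lookback (X (Some i)) s w)%N) ->
  forall j, (j <= N)%N ->
  Delta V N.+1 t w = Delta V (N.+1 - j)%N (hop X N t w j) w +
     (\sum_((N - j)%N.+1 <= i < N.+1) eta X N t i w)%N%:Z /\
  hop X N t w j = t - (\sum_((N - j)%N.+1 <= i < N.+1) mdelay X N t i w)%N%:Z.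
Proof.
move=> pos; elim => [_|j IH jN].
  by rewrite !big_geq ?subn0 //=; split; lia.
have [IH1 IH2] := IH (ltnW jN).
pose i0 := (N - j)%N.
have i0N : (1 <= i0 <= N)%N by rewrite /i0; lia.
have Nj : (N - i0 = j)%N by rewrite /i0; lia.
have -> : ((N - j.+1)%N.+1 = i0)%N by rewrite /i0; lia.
have bsplit (F : nat -> nat) : (\sum_(i0 <= i < N.+1) F i = F i0 + \sum_(i0.+1 <= i < N.+1) F i)%N.
  by rewrite big_ltn //; rewrite /i0; lia.
rewrite !bsplit.
have hm : mdelay X N t i0 w = lookback (X (Some i0)) (hop X N t w j) w by rewrite /mdelay Nj.
have hpos := pos i0 (hop X N t w j) i0N.
case E: (lookback (X (Some i0)) (hop X N t w j) w) hpos => [//|l] _.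
have hopS : hop X N t w j.+1 = hop X N t w j - (l.+1)%:Z by rewrite /= -/i0 E.
split; last by rewrite hopS IH2 hm E PoszD /i0; lia.
rewrite IH1.
have -> : (N.+1 - j = i0.+1)%N by rewrite /i0; lia.
have -> : (N.+1 - j.+1 = i0)%N by rewrite /i0; lia.
rewrite /Delta (Vrelay i0N E) (Vsrc (hop X N t w j) w l.+1) hopS.
have -> : eta X N t i0 w =
   (\sum_(k < l.+1) nat_of_bool (X None ((hop X N t w j - 1 - (k : nat)%:Z)%R : int) w))%N.
  rewrite /eta Nj.
  move: (hm); rewrite E => ->.
  by [].
rewrite PoszD /i0; lia.
Qed.

End Delta.

Lemma series_ind (R : realType) (m : nat) (f : nat -> bool) :
  (\sum_(n <oo) (((((n < m)%N && f n) : nat)%:R : R)%:E) =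
   (((\sum_(k < m) (f k : nat))%N)%:R)%:E)%E.
Proof.
rewrite (@nneseries_split R _ 0 m); last by move=> k _; rewrite lee_fin.
rewrite add0n eseries0 ?adde0; last by move=> i mi _; rewrite ltnNge mi.
rewrite sumEFin natr_sum big_mkord; congr (_%:E); apply: eq_bigr => k _.
by rewrite ltn_ord.
Qed.

Lemma indic_set (T : Type) (R : realType) (b : T -> bool) w :
  (\1_([set w | b w]) w : R) = (b w)%:R.
Proof.
rewrite indicE; case E: (b w).
  by rewrite mem_set.
by rewrite memNset //= E.
Qed.

Section S7.
Context (R : realType) (d : measure_display) (T : measurableType d)
  (P : probability T R) (N : nat) (pg : R) (rho : nat -> R)
  (X : option nat -> int -> T -> bool).
Hypothesis pg01 : 0 <= pg <= 1.
Hypothesis rho01 : forall i, (i <= N)%N -> 0 < rho i <= 1.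
Hypothesis Hfam : bernoulli_family P N pg rho X.

Local Notation cyl := (cyl X).
Local Notation cylP := (cylP pg rho).
Local Notation okL := (okL N).
Local Notation indep := (indep P N pg rho X).
Local Notation NoSucc := (NoSucc X).

Definition Gt i s n : set T := [set w | (n < lookback (X (Some i)) s w)%N].

Lemma GtE i s n : Gt i s n = cyl (noL i s n) (fun=> false) `\` NoSucc i s.
Proof.
apply/seteqP; split => w /=.
  rewrite /Gt /=; case E: (lookback _ s w) => [//|m] nm.
  have [Sm Hk] := (lookbackSP _ _ _ _).1 E.
  split.
    move=> x /mapP [k]; rewrite mem_iota add0n => /andP[_ kn] -> /=.
    by apply/negbTE/Hk; lia.
  by rewrite NoSuccE /= E.
case=> Hc; rewrite NoSuccE /Gt /=; case E: (lookback _ s w) => [//|m] _.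
have [Sm _] := (lookbackSP _ _ _ _).1 E.
rewrite ltnS leqNgt; apply/negP => mn.
have Hm : (Some i, s - (m.+1)%:Z) \in noL i s n.
  by apply/mapP; exists m => //; rewrite mem_iota add0n.
by have := Hc _ Hm; rewrite /= Sm.
Qed.

Lemma Gt_meas i s n : (i <= N)%N -> measurable (Gt i s n).
Proof.
move=> iN; rewrite GtE; apply: measurableD.
  by apply: (cyl_meas Hfam); apply/allP => x; rewrite /noL => /mapP [k _ ->].
exact: (NoSucc_meas Hfam).
Qed.

Lemma Gt_indep (S : pred (option nat)) i s n : (i <= N)%N -> ~~ S (Some i) ->
  indep S (Gt i s n) ((1 - rho i) ^+ n).
Proof.
move=> iN nSi; split; first exact: Gt_meas.
move=> L b okl.
have vL := okL_all okl.
have mC : measurable (cyl L b) by apply: (cyl_meas Hfam).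
have mno : measurable (cyl (noL i s n) (fun=> false)).
  by apply: (cyl_meas Hfam); apply/allP => x; rewrite /noL => /mapP [k _ ->].
have mNS := NoSucc_meas Hfam s iN.
have uL : uniq (L ++ noL i s n).
  case/andP: (okl) => uL aL; rewrite cat_uniq uL /=.
  have /andP[-> _] := okL_shift (S := predT) s n iN isT.
  rewrite andbT; apply/hasPn => x; rewrite /noL => /mapP [k _ ->]; apply/negP => /(allP aL) /andP[_].
  by rewrite (negbTE nSi).
rewrite GtE setIDA.
transitivity (P (cyl L b `&` cyl (noL i s n) (fun=> false)) -
              P ((cyl L b `&` cyl (noL i s n) (fun=> false)) `&` NoSucc i s))%E.
  apply: measureD => //; first exact: measurableI.
  by apply: (le_lt_trans (probability_le1 P (measurableI _ _ mC mno))); rewrite ltry.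
have -> : P ((cyl L b `&` cyl (noL i s n) (fun=> false)) `&` NoSucc i s) = 0%E.
  apply/eqP; rewrite eq_le measure_ge0 andbT -(NoSucc_null rho01 Hfam s iN).
  apply: le_measure; rewrite ?inE.
  - exact: (measurableI _ _ (measurableI _ _ mC mno) mNS).
  - exact: mNS.
  - by move=> w [].
rewrite sube0 cylI // (cylE Hfam (S := predT)).
  by rewrite cylP_cat // cylP_no.
apply/andP; split => //; rewrite all_cat; apply/andP; split; apply/allP => x xL.
  by rewrite (allP vL x xL).
by move: xL; rewrite /noL => /mapP [k _ ->] /=; rewrite iN.
Qed.

Lemma int_series (A : nat -> nat -> set T) (I : seq nat) :
  (forall i n, measurable (A i n)) ->
  (\int[P]_w (\sum_(i <- I) \sum_(n <oo) (\1_(A i n) w)%:E) =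
   \sum_(i <- I) \sum_(n <oo) P (A i n))%E.
Proof.
move=> mA.
have mI i n : measurable_fun setT (fun w => ((\1_(A i n) w : R)%:E : \bar R)).
  by apply/measurable_EFinP; exact: measurable_indic.
rewrite ge0_integral_sum //; first last.
- by move=> i w _; apply: nneseries_ge0 => n _ _; rewrite lee_fin.
- move=> i.
  have H : measurable_fun setT (fun x => (\sum_(n <oo | n \in xpredT) ((\1_(A i n) x : R)%:E))%E).
    by apply: ge0_emeasurable_sum => // k w _ _; rewrite lee_fin.
  exact: (eq_measurable_fun _ (fun w _ => eq_eseriesl _ _ (fun n => erefl)) H).
apply: eq_bigr => i _; rewrite integral_nneseries //;
  try (by move=> n w _; rewrite lee_fin); try (by move=> n; exact: mI).
by apply: eq_eseriesr => n _; rewrite integral_indic // setIT.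
Qed.

End S7.

Lemma series_ind1 (R : realType) (m : nat) :
  (\sum_(n <oo) ((((n < m)%N : nat)%:R : R)%:E) = ((m%:R : R))%:E)%E.
Proof.
have := series_ind R m xpredT.
rewrite sum_nat_const card_ord muln1 => <-.
by apply: eq_eseriesr => n _; rewrite andbT.
Qed.

Theorem lemma3 (R : realType) (d : measure_display) (T : measurableType d)
  (P : probability T R) (N : nat) (pg : R) (rho : nat -> R)
  (X : option nat -> int -> T -> bool) (u : int -> T -> bool)
  (V : nat -> int -> T -> int) :
  0 <= pg <= 1 ->
  (forall i, (i <= N)%N -> 0 < rho i <= 1) ->
  bernoulli_family P N pg rho X ->
  (forall s w, V 0%N (s + 1) w = V 0%N s w + ((X None s w : nat)%:Z)) ->
  (forall s w, V 1%N (s + 1) w =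
                 if u s w && X (Some 0%N) s w then V 0%N s w else V 1%N s w) ->
  (forall i s w, (1 <= i <= N)%N ->
     V i.+1 (s + 1) w = if X (Some i) s w then V i s w else V i.+1 s w) ->
  forall t : int,
  [/\ {ae P, forall w, Delta V N.+1 t w =
                        Delta V 1%N (t - (tau X N t w)%:Z) w + (beta X N t w)%:Z},
      (forall l : nat -> nat, (forall i, (1 <= i <= N)%N -> (0 < l i)%N) ->
         P [set w | forall i, (1 <= i <= N)%N -> mdelay X N t i w = l i] =
         (\prod_(1 <= i < N.+1) ((1 - rho i) ^+ (l i).-1 * rho i))%:E),
      (forall i l k, (1 <= i <= N)%N -> (0 < l)%N ->
         P [set w | mdelay X N t i w = l /\ eta X N t i w = k] =
         ((1 - rho i) ^+ l.-1 * rho i *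
            ('C(l, k)%:R * pg ^+ k * (1 - pg) ^+ (l - k)))%:E),
      (\int[P]_w ((tau X N t w)%:R)%:E = (\sum_(1 <= i < N.+1) (rho i)^-1)%:E)%E &
      (\int[P]_w ((beta X N t w)%:R)%:E =
         (pg * \sum_(1 <= i < N.+1) (rho i)^-1)%:E)%E].
Proof.
move=> pg01 rho01 Hfam hV0 hV1 hVi t.
have geo1 i : (i <= N)%N -> forall a,
    (\sum_(n <oo) (a * (1 - rho i) ^+ n)%:E = (a / rho i)%:E)%E.
  move=> iN a; case/andP: (rho01 _ iN) => r0 r1.
  rewrite geo_eseries; last by rewrite subr_ge0 r1 /= ltrBlDr ltrDl.
  by have -> : 1 - (1 - rho i) = rho i by rewrite opprB addrC subrK.
split.
-
  pose ZZ (n i : nat) : set T :=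
    if (1 <= i <= N)%N then NoSucc X i (Posz n) `|` NoSucc X i (- Posz n) else set0.
  have HZ : P.-negligible (\bigcup_n \bigcup_i ZZ n i).
    apply: negligible_bigcup => n; apply: negligible_bigcup => i.
    rewrite /ZZ; case: ifP => [/andP[_ iN]|_]; last exact: negligible_set0.
    apply: negligibleU; apply/negligibleP;
      try exact: (NoSucc_meas Hfam); exact: (NoSucc_null rho01 Hfam).
  apply: (negligibleS _ HZ) => w /= nQ.
  case: (pselect ((\bigcup_n \bigcup_i ZZ n i) w)) => // nZ; exfalso; apply: nQ.
  have pos : forall i s, (1 <= i <= N)%N -> (0 < lookback (X (Some i)) s w)%N.
    move=> i s iN; rewrite lt0n; apply/negP => /eqP /lookback0P H0; apply: nZ.
    case: s H0 => n H0.
      by exists n => //; exists i => //; rewrite /ZZ iN; left; exact: H0.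
    exists n.+1 => //; exists i => //; rewrite /ZZ iN; right.
    by move=> k; move: (H0 k); rewrite NegzE.
  have [H1 H2] := delta_gen hV0 hVi t pos (leqnn N).
  rewrite H1 H2 subnn.
  by have -> : (N.+1 - N = 1)%N by lia.
-
  move=> l lpos.
  have H := joint_gen pg01 Hfam t lpos (leqnn N) (F := fun _ => setT) (c := 1) _.
  rewrite subnn mulr1 in H; rewrite -H; last first.
    move=> s; split => // L b okl; rewrite /= setIT mulr1; exact: (cylE Hfam _ okl).
  congr (P _); apply/seteqP; split => w /=.
    by move=> Hi; split.
  by case.
-
  move=> i l k iN lpos.
  case: l lpos => [//|l] _.
  have e : (N - (N - i) = i)%N by lia.
  have HF : forall s, indep P N pg rho X (above (N - (N - i)))
      (cyl X (geoL i s l) (geoB s l) `&` Cnt X s l.+1 k)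
      ((1 - rho i) ^+ l * rho i * binom pg l.+1 k).
    by move=> s; rewrite e; exact: GeoCnt_indep.
  have [_ H] := hop_gen pg01 rho01 Hfam t (leq_subr i N) HF.
  have E w m : mdelay X N t i w = m -> eta X N t i w =
      (\sum_(k < m) nat_of_bool (X None ((hop X N t w (N - i) - 1 - (k : nat)%:Z)%R : int) w))%N.
    by move=> <-.
  rewrite /= -H; congr (P _); apply/seteqP; split => w /=.
    case=> Hm He; split; first by rewrite GeoE /=; exact: Hm.
    by move: He; rewrite (E w _ Hm).
  case=> Hg Hc; move: Hg; rewrite GeoE /= => Hm; split; first exact: Hm.
  by rewrite (E w _ Hm).
-
  pose A (i n : nat) : set T :=
    if (1 <= i <= N)%N then [set w | (n < mdelay X N t i w)%N] else set0.
  have PA i n : (1 <= i <= N)%N -> measurable (A i n) /\ P (A i n) = ((1 - rho i) ^+ n)%:E.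
    move=> iN; rewrite /A iN.
    have e : (N - (N - i) = i)%N by lia.
    have HF : forall s, indep P N pg rho X (above (N - (N - i))) (Gt X i s n) ((1 - rho i) ^+ n).
      move=> s; rewrite e; apply: Gt_indep => //; first by case/andP: iN.
      by rewrite /= ltnn.
    exact: (hop_gen pg01 rho01 Hfam t (leq_subr i N) HF).
  have mA i n : measurable (A i n).
    by case iN: (1 <= i <= N)%N; [case: (PA i n iN) | rewrite /A iN].
  transitivity (\int[P]_w (\sum_(i <- index_iota 1 N.+1) \sum_(n <oo) (\1_(A i n) w)%:E))%E.
    apply: eq_integral => w _; rewrite /tau natr_sum -sumEFin.
    apply: eq_big_nat => i iN; rewrite -series_ind1.
    by apply: eq_eseriesr => n _; rewrite /A iN indic_set.
  rewrite int_series // -sumEFin; apply: eq_big_nat => i iN.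
  have iN' : (i <= N)%N by case/andP: iN.
  transitivity (\sum_(n <oo) (1 * (1 - rho i) ^+ n)%:E)%E.
    by apply: eq_eseriesr => n _; rewrite (PA i n iN).2 mul1r.
  by rewrite geo1 // div1r.
-
  pose B (i n : nat) : set T :=
    if (1 <= i <= N)%N then
      [set w | (n < mdelay X N t i w)%N && X None (hop X N t w (N - i) - 1 - n%:Z) w]
    else set0.
  have PB i n : (1 <= i <= N)%N -> measurable (B i n) /\ P (B i n) = ((pg * (1 - rho i) ^+ n))%:E.
    move=> iN; rewrite /B iN.
    have e : (N - (N - i) = i)%N by lia.
    have iN' : (i <= N)%N by case/andP: iN.
    have HF : forall s, indep P N pg rho X (above (N - (N - i)))
        (cyl X [:: xN s n] (fun=> true) `&` Gt X i s n) (pg * (1 - rho i) ^+ n).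
      move=> s; rewrite e.
      have HG : indep P N pg rho X (fun a => a != Some i) (Gt X i s n) ((1 - rho i) ^+ n).
        by apply: Gt_indep => //; rewrite /= eqxx.
      have ok1 : okL N (fun a => a != Some i) [:: xN s n] by [].
      have nS : forall x, x \in [:: xN s n] -> ~~ above i x.1.
        by move=> x; rewrite inE => /eqP -> /=.
      have SS : forall a, above i a -> a != Some i.
        by case => // j /=; apply: contraTneq => -[->]; rewrite ltnn.
      have := indep_cyl Hfam (fun=> true) HG ok1 nS SS.
      by rewrite /cylP big_seq1.
    have [mB PB] := hop_gen pg01 rho01 Hfam t (leq_subr i N) HF.
    have -> : [set w | (n < mdelay X N t i w)%N && X None (hop X N t w (N - i) - 1 - n%:Z) w] =
        [set w | (cyl X [:: xN (hop X N t w (N - i)) n] (fun=> true) `&`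
                  Gt X i (hop X N t w (N - i)) n) w].
      apply/seteqP; split => w /=.
        case/andP => h1 h2; split => //; rewrite cyl1 /=; exact: h2.
      by case; rewrite cyl1 /= => -> h; rewrite andbT.
    by split.
  have mB i n : measurable (B i n).
    by case iN: (1 <= i <= N)%N; [case: (PB i n iN) | rewrite /B iN].
  transitivity (\int[P]_w (\sum_(i <- index_iota 1 N.+1) \sum_(n <oo) (\1_(B i n) w)%:E))%E.
    apply: eq_integral => w _; rewrite /beta natr_sum -sumEFin.
    apply: eq_big_nat => i iN; rewrite /eta /=.
    rewrite -(series_ind R (mdelay X N t i w)
               (fun k => X None ((hop X N t w (N - i) - 1 - (k : nat)%:Z)%R : int) w)).
    by apply: eq_eseriesr => n _; rewrite /B iN indic_set.
  rewrite int_series // mulr_sumr -sumEFin; apply: eq_big_nat => i iN.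
  have iN' : (i <= N)%N by case/andP: iN.
  transitivity (\sum_(n <oo) (pg * (1 - rho i) ^+ n)%:E)%E.
    by apply: eq_eseriesr => n _; rewrite (PB i n iN).2.
  by rewrite geo1.
Qed.
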